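(* Let $R,LM,C,\widetilde C,Ceq,\widetilde{Ceq}$ be as below, assume all conditions (1.1)–(7b) listed below hold, and let $\sim,\simeq$ be as below. Then for all data in $C,\widetilde C$ (with $n=l(\Gamma_1)=l(\Gamma'_1)$ or $n=l(\Gamma)$): (1) if $(\Gamma_1,T)\sim(\Gamma'_1,T')$ and $(\Gamma_1,\Gamma_2)\sim(\Gamma'_1,\Gamma'_2)$, then $(\Gamma_1,T,t_{n+1}\Gamma_2)\sim(\Gamma'_1,T',t_{n+1}\Gamma'_2)$; (2) if $(\Gamma_1,T)\sim(\Gamma'_1,T')$ and $(\Gamma_1,\Gamma_2\vdash o:S)\simeq(\Gamma'_1,\Gamma'_2\vdash o':S')$, then $(\Gamma_1,T,t_{n+1}\Gamma_2\vdash t_{n+1}o:t_{n+1}S)\simeq(\Gamma'_1,T',t_{n+1}\Gamma'_2\vdash t_{n+1}o':t_{n+1}S')$; (3) if $(\Gamma_1\vdash r:T)\simeq(\Gamma'_1\vdash r':T')$ and $(\Gamma_1,T,\Gamma_2)\sim(\Gamma'_1,T',\Gamma'_2)$, then $(\Gamma_1,s_{n+1}(\Gamma_2[r/n+1]))\sim(\Gamma'_1,s_{n+1}(\Gamma'_2[r'/n+1]))$; (4) if $(\Gamma_1\vdash r:T)\simeq(\Gamma'_1\vdash r':T')$ and $(\Gamma_1,T,\Gamma_2\vdash o:S)\simeq(\Gamma'_1,T',\Gamma'_2\vdash o':S')$, then $(\Gamma_1,s_{n+1}(\Gamma_2[r/n+1])\vdash s_{n+1}(o[r/n+1]):s_{n+1}(S[r/n+1]))\simeq(\Gamma'_1,s_{n+1}(\Gamma'_2[r'/n+1])\vdash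 s_{n+1}(o'[r'/n+1]):s_{n+1}(S'[r'/n+1]))$; (5) if $(\Gamma,T)\sim(\Gamma',T')$, then $(\Gamma,T\vdash n+1:t_{n+1}T)\simeq(\Gamma',T'\vdash n+1:t_{n+1}T')$. Conditions (for all well-formed data, $n=l(\Gamma)$, $i=l(\Gamma_1)$): (1.1) $(\rhd)$; (1.2) $(\Gamma,T\rhd)\Rightarrow(\Gamma\rhd)$; (1.3) $(\Gamma\vdash r:R)\Rightarrow(\Gamma,R\rhd)$; (1.4) $(\Gamma,T\rhd)\wedge(\Gamma,\Delta\vdash r:R)\Rightarrow(\Gamma,T,t_{n+1}\Delta\vdash t_{n+1}r:t_{n+1}R)$; (1.5) $(\Gamma\vdash s:S)\wedge(\Gamma,S,\Delta\vdash r:R)\Rightarrow(\Gamma,s_{n+1}(\Delta[s/n+1])\vdash s_{n+1}(r[s/n+1]):s_{n+1}(R[s/n+1]))$; (1.6) $(\Gamma,T\rhd)\Rightarrow(\Gamma,T\vdash n+1:t_{n+1}T)$; (2a) $(\Gamma\vdash T=T')\Rightarrow(\Gamma,T\rhd)$; (2b) $(\Gamma,T\rhd)\Rightarrow(\Gamma\vdash T=T)$; (2c),(2d) symmetry and transitivity of $(\Gamma\vdash T=T')$; (3a) $(\Gamma\vdash o=o':T)\Rightarrow(\Gamma\vdash o:T)$; (3b) $(\Gamma\vdash o:T)\Rightarrow(\Gamma\vdash o=o:T)$; (3c),(3d) symmetry and transitivity of $(\Gamma\vdash o=o':T)$; (4a) $(\Gamma_1\vdash T=T')\wedge(\Gamma_1,T,\Gamma_2\vdash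 S=S')\Rightarrow(\Gamma_1,T',\Gamma_2\vdash S=S')$; (4b) $(\Gamma_1\vdash T=T')\wedge(\Gamma_1,T,\Gamma_2\vdash o=o':S)\Rightarrow(\Gamma_1,T',\Gamma_2\vdash o=o':S)$; (4c) $(\Gamma\vdash S=S')\wedge(\Gamma\vdash o=o':S)\Rightarrow(\Gamma\vdash o=o':S')$; (5a) $(\Gamma_1,T\rhd)\wedge(\Gamma_1,\Gamma_2\vdash S=S')\Rightarrow(\Gamma_1,T,t_{i+1}\Gamma_2\vdash t_{i+1}S=t_{i+1}S')$; (5b) $(\Gamma_1,T\rhd)\wedge(\Gamma_1,\Gamma_2\vdash o=o':S)\Rightarrow(\Gamma_1,T,t_{i+1}\Gamma_2\vdash t_{i+1}o=t_{i+1}o':t_{i+1}S)$; (6a) $(\Gamma_1,T,\Gamma_2\vdash S=S')\wedge(\Gamma_1\vdash r:T)\Rightarrow(\Gamma_1,s_{i+1}(\Gamma_2[r/i+1])\vdash s_{i+1}(S[r/i+1])=s_{i+1}(S'[r/i+1]))$; (6b) $(\Gamma_1,T,\Gamma_2\vdash o=o':S)\wedge(\Gamma_1\vdash r:T)\Rightarrow(\Gamma_1,s_{i+1}(\Gamma_2[r/i+1])\vdash s_{i+1}(o[r/i+1])=s_{i+1}(o'[r/i+1]):s_{i+1}(S[r/i+1]))$; (7a) $(\Gamma_1,T,\Gamma_2,S\rhd)\wedge(\Gamma_1\vdash r=r':T)\Rightarrow(\Gamma_1,s_{i+1}(\Gamma_2[r/i+1])\vdash s_{i+1}(S[r/i+1])=s_{i+1}(S[r'/i+1]))$;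 (7b) $(\Gamma_1,T,\Gamma_2\vdash o:S)\wedge(\Gamma_1\vdash r=r':T)\Rightarrow(\Gamma_1,s_{i+1}(\Gamma_2[r/i+1])\vdash s_{i+1}(o[r/i+1])=s_{i+1}(o[r'/i+1]):s_{i+1}(S[r/i+1]))$.
   Context: $[n]=\{1,\dots,n\}$. $R$ is a monad on Sets (unit $\eta$, Kleisli extension $\mathrm{bind}$), $LM$ a left $R$-module with action $\rho(f):LM(X)\to LM(Y)$ for $f:X\to R(Y)$. Elements of $Y$ are regarded in $R(Y)$ via $\eta_Y$; $E(f_1/1,\dots,f_m/m)$ is $\rho(f)(E)$ or $\mathrm{bind}(f)(E)$ with $f(i)=f_i$. For $E$ in $LM([m])$ or $R([m])$, $m\ge n$: $t_{n+1}E:=E(1/1,\dots,n/n,n+2/n+1,\dots,m+1/m)$; for $m\ge n+1$, $s\in R([n])$: $s_{n+1}(E[s/n+1]):=E(1/1,\dots,n/n,s/n+1,n+1/n+2,\dots,m-1/m)$; both applied componentwise to sequences. $C,\widetilde C,Ceq,\widetilde{Ceq}$ are subsets of $\coprod_n\prod_{j<n}LM([j])$, $\coprod_n(\prod_{j\le n}LM([j]))\times R([n])$, $\coprod_n(\prod_{j<n}LM([j]))\times LM([n])^2$, $\coprod_n(\prod_{j\le n}LM([j]))\times R([n])^2$. Contexts: $\Gamma=(T_1,\dots,T_n)$, $T_j\in LM([j-1])$, $l(\Gamma)=n$, $ft$ drops the last entry, commas concatenate. $(\Gamma\rhd)$: $\Gamma\in C$; $(\Gamma\vdash t:T)$: $(\Gamma,T,t)\in\widetilde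 C$; $(\Gamma\vdash S=S')$: $(\Gamma,S,S')\in Ceq$; $(\Gamma\vdash o=o':S)$: $(\Gamma,S,o,o')\in\widetilde{Ceq}$. $\sim$ on $C$: $(T_1,\dots,T_n)\sim(T'_1,\dots,T'_n)$ iff $n=0$ or ($ft$'s related and $(T_1,\dots,T_{n-1}\vdash T_n=T'_n)$); different lengths never related. $\simeq$ on $\widetilde C$: $(\Gamma\vdash o:S)\simeq(\Gamma'\vdash o':S')$ iff $(\Gamma,S)\sim(\Gamma',S')$ and $(\Gamma\vdash o=o':S)$. *)

(* Defs.v *)
From mathcomp Require Export all_boot.

Set Implicit Arguments.
Unset Strict Implicit.
Unset Printing Implicit Defensive.

(* Conventions: the finite set [n] = {1,...,n} is represented by the ordinal
   type 'I_n = {0,...,n-1}; the variable k of [n] is the ordinal k-1. *)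

Record monad := Monad {
  mon : Type -> Type;
  ret : forall X : Type, X -> mon X;
  bind : forall X Y : Type, (X -> mon Y) -> mon X -> mon Y;
  bind_ret_l : forall (X Y : Type) (f : X -> mon Y) (x : X), bind f (ret x) = f x;
  bind_ret_r : forall (X : Type) (m : mon X), bind (@ret X) m = m;
  bind_assoc : forall (X Y Z : Type) (f : X -> mon Y) (g : Y -> mon Z) (m : mon X),
      bind g (bind f m) = bind (fun x => bind g (f x)) m }.
Arguments ret {_ _} _.
Arguments bind {_ _ _} _ _.

Record lmodule (M : monad) := LModule {
  lm : Type -> Type;
  act : forall X Y : Type, (X -> mon M Y) -> lm X -> lm Y;
  act_ret : forall (X : Type) (E : lm X), act (fun x : X => ret x) E = E;
  act_comp : forall (X Y Z : Type) (f : X -> mon M Y) (g : Y -> mon M Z) (E : lm X),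
      act g (act f E) = act (fun x => bind g (f x)) E }.
Arguments act {_ _ _ _} _ _.

(* Contexts (T_1,...,T_n), T_j in LM([j-1]), as snoc-telescopes. *)
Inductive ctx (LM : Type -> Type) : nat -> Type :=
| cnil : ctx LM 0
| csnoc n : ctx LM n -> LM 'I_n -> ctx LM n.+1.
Arguments cnil {LM}.
Arguments csnoc {LM n} G T.

Fixpoint addr (n d : nat) : nat := match d with 0 => n | d'.+1 => (addr n d').+1 end.

(* Extensions Gamma_2 of a context of length n by d types: the j-th added
   type (j = 1..d) lies in LM([n+j-1]). *)
Inductive ext (LM : Type -> Type) (n : nat) : nat -> Type :=
| enil : ext LM n 0
| esnoc d : ext LM n d -> LM 'I_(addr n d) -> ext LM n d.+1.
Arguments enil {LM n}.
Arguments esnoc {LM n d} G T.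

Fixpoint capp (LM : Type -> Type) n d (G : ctx LM n) (D : ext LM n d) : ctx LM (addr n d) :=
  match D in ext _ _ d return ctx LM (addr n d) with
  | enil => G
  | esnoc d' D' E => csnoc (capp G D') E
  end.

Lemma addrSl n d : addr n.+1 d = (addr n d).+1.
Proof. by elim: d => //= d ->. Qed.

Lemma addrSl_pred n d : (addr n.+1 d).-1 = addr n d.
Proof. by rewrite addrSl. Qed.

Lemma addr_ge n d : n <= addr n d.
Proof. by elim: d => //= d IH; apply: leq_trans IH _. Qed.

Lemma addr_ltS n d : n < (addr n d).+1.
Proof. exact: addr_ge. Qed.

Lemma addr_posn n d : n < addr n.+1 d.
Proof. by rewrite addrSl; exact: addr_ge. Qed.

(* renaming for t_{n+1}: variable k |-> k (k <= n), k |-> k+1 (k >= n+1) *)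
Definition wk n d (j : 'I_(addr n d)) : 'I_(addr n.+1 d) :=
  cast_ord (esym (addrSl n d)) (lift (Ordinal (addr_ltS n d)) j).

(* the position n+1 (0-based: n) in [addr n.+1 d] *)
Definition posn n d : 'I_(addr n.+1 d) := Ordinal (addr_posn n d).

Section Ops.
Variables (M : monad) (L : lmodule M).
Local Notation R := (mon M).
Local Notation LM := (lm L).

(* substitution for s_{n+1}(_[s/n+1]):
   k |-> k (k <= n), n+1 |-> s (included in R([m-1])), k |-> k-1 (k >= n+2) *)
Definition sb n d (s : R 'I_n) (j : 'I_(addr n.+1 d)) : R 'I_(addr n d) :=
  match unlift (posn n d) j with
  | Some k => ret (cast_ord (addrSl_pred n d) k)
  | None => bind (fun i : 'I_n => ret (widen_ord (addr_ge n d) i)) s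
  end.

Definition tL n d (E : LM 'I_(addr n d)) : LM 'I_(addr n.+1 d) :=
  act (fun j => ret (wk j)) E.
Definition tR n d (E : R 'I_(addr n d)) : R 'I_(addr n.+1 d) :=
  bind (fun j => ret (wk j)) E.

Definition sL n d (s : R 'I_n) (E : LM 'I_(addr n.+1 d)) : LM 'I_(addr n d) :=
  act (@sb n d s) E.
Definition sR n d (s : R 'I_n) (E : R 'I_(addr n.+1 d)) : R 'I_(addr n d) :=
  bind (@sb n d s) E.

Fixpoint text n d (D : ext LM n d) : ext LM n.+1 d :=
  match D in ext _ _ d return ext LM n.+1 d with
  | enil => enil
  | esnoc d' D' E => esnoc (text D') (@tL n d' E)
  end.

Fixpoint sext n d (s : R 'I_n) (D : ext LM n.+1 d) : ext LM n d :=
  match D in ext _ _ d return ext LM n d with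
  | enil => enil
  | esnoc d' D' E => esnoc (sext s D') (@sL n d' s E)
  end.

Variables (C : forall n, ctx LM n -> Prop)
          (Ct : forall n, ctx LM n -> LM 'I_n -> R 'I_n -> Prop)
          (Ceq : forall n, ctx LM n -> LM 'I_n -> LM 'I_n -> Prop).
Variable (Ceqt : forall n, ctx LM n -> LM 'I_n -> R 'I_n -> R 'I_n -> Prop).

Inductive simc : forall n, ctx LM n -> ctx LM n -> Prop :=
| simc0 : C cnil -> simc cnil cnil
| simcS n (G G' : ctx LM n) (T T' : LM 'I_n) :
    C (csnoc G T) -> C (csnoc G' T') ->
    simc G G' -> Ceq G T T' -> simc (csnoc G T) (csnoc G' T').

Definition simt n (G : ctx LM n) (S : LM 'I_n) (o : R 'I_n)
                  (G' : ctx LM n) (S' : LM 'I_n) (o' : R 'I_n) : Prop :=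
  [/\ Ct G S o, Ct G' S' o', simc (csnoc G S) (csnoc G' S') & Ceqt G S o o'].

End Ops.

(* Main.v *)
Require Import Defs.
From Stdlib Require Import Program.Equality.

Lemma simc_inv (M : monad) (L : lmodule M) (C : forall n, ctx (lm L) n -> Prop)
  (Ceq : forall n, ctx (lm L) n -> lm L 'I_n -> lm L 'I_n -> Prop)
  n (G G' : ctx (lm L) n) T T' :
  simc C Ceq (csnoc G T) (csnoc G' T') ->
  [/\ C _ (csnoc G T), C _ (csnoc G' T'), simc C Ceq G G' & Ceq _ G T T'].
Proof. move=> H; dependent destruction H; by split. Qed.

Lemma ext_caseS (LM : Type -> Type) n d (E : ext LM n d.+1) :
  {D : ext LM n d & {T : LM 'I_(addr n d) | E = esnoc D T}}.
Proof.
refine (match E in ext _ _ k return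
   (match k return ext LM n k -> Type with 0 => fun _ => unit
    | k'.+1 => fun E => {D : ext LM n k' & {T : LM 'I_(addr n k') | E = esnoc D T}} end E)
  with enil => tt | esnoc _ D T => existT _ D (exist _ T erefl) end).
Qed.

Lemma ext_case0 (LM : Type -> Type) n (E : ext LM n 0) : E = enil.
Proof.
refine (match E in ext _ _ k return
   (match k return ext LM n k -> Prop with 0 => fun E => E = enil
    | _.+1 => fun _ => True end E)
  with enil => erefl | esnoc _ _ _ => I end).
Qed.
Theorem lemma6p6 (M : monad) (L : lmodule M)
  (C : forall n, ctx (lm L) n -> Prop)
  (Ct : forall n, ctx (lm L) n -> lm L 'I_n -> mon M 'I_n -> Prop)
  (Ceq : forall n, ctx (lm L) n -> lm L 'I_n -> lm L 'I_n -> Prop)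
  (Ceqt : forall n, ctx (lm L) n -> lm L 'I_n -> mon M 'I_n -> mon M 'I_n -> Prop)
  (* (1.1) *)
  (h1_1 : C _ cnil)
  (* (1.2) *)
  (h1_2 : forall n (G : ctx (lm L) n) T, C _ (csnoc G T) -> C _ G)
  (* (1.3) *)
  (h1_3 : forall n (G : ctx (lm L) n) S r, Ct _ G S r -> C _ (csnoc G S))
  (* (1.4) *)
  (h1_4 : forall n d (G : ctx (lm L) n) T (D : ext (lm L) n d) S r,
      C _ (csnoc G T) -> Ct _ (capp G D) S r ->
      Ct _ (capp (csnoc G T) (text D)) (tL S) (tR r))
  (* (1.5) *)
  (h1_5 : forall n d (G : ctx (lm L) n) S s (D : ext (lm L) n.+1 d) Q r,
      Ct _ G S s -> Ct _ (capp (csnoc G S) D) Q r ->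
      Ct _ (capp G (sext s D)) (sL s Q) (sR s r))
  (* (1.6) *)
  (h1_6 : forall n (G : ctx (lm L) n) T,
      C _ (csnoc G T) -> Ct _ (csnoc G T) (@tL _ L n 0 T) (ret ord_max))
  (* (2a)-(2d) *)
  (h2a : forall n (G : ctx (lm L) n) T T', Ceq _ G T T' -> C _ (csnoc G T))
  (h2b : forall n (G : ctx (lm L) n) T, C _ (csnoc G T) -> Ceq _ G T T)
  (h2c : forall n (G : ctx (lm L) n) T T', Ceq _ G T T' -> Ceq _ G T' T)
  (h2d : forall n (G : ctx (lm L) n) T T' T'',
      Ceq _ G T T' -> Ceq _ G T' T'' -> Ceq _ G T T'')
  (* (3a)-(3d) *)
  (h3a : forall n (G : ctx (lm L) n) T o o', Ceqt _ G T o o' -> Ct _ G T o)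
  (h3b : forall n (G : ctx (lm L) n) T o, Ct _ G T o -> Ceqt _ G T o o)
  (h3c : forall n (G : ctx (lm L) n) T o o', Ceqt _ G T o o' -> Ceqt _ G T o' o)
  (h3d : forall n (G : ctx (lm L) n) T o o' o'',
      Ceqt _ G T o o' -> Ceqt _ G T o' o'' -> Ceqt _ G T o o'')
  (* (4a) *)
  (h4a : forall n d (G1 : ctx (lm L) n) T T' (G2 : ext (lm L) n.+1 d) S S',
      Ceq _ G1 T T' -> Ceq _ (capp (csnoc G1 T) G2) S S' ->
      Ceq _ (capp (csnoc G1 T') G2) S S')
  (* (4b) *)
  (h4b : forall n d (G1 : ctx (lm L) n) T T' (G2 : ext (lm L) n.+1 d) S o o',
      Ceq _ G1 T T' -> Ceqt _ (capp (csnoc G1 T) G2) S o o' ->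
      Ceqt _ (capp (csnoc G1 T') G2) S o o')
  (* (4c) *)
  (h4c : forall n (G : ctx (lm L) n) S S' o o',
      Ceq _ G S S' -> Ceqt _ G S o o' -> Ceqt _ G S' o o')
  (* (5a) *)
  (h5a : forall n d (G1 : ctx (lm L) n) T (G2 : ext (lm L) n d) S S',
      C _ (csnoc G1 T) -> Ceq _ (capp G1 G2) S S' ->
      Ceq _ (capp (csnoc G1 T) (text G2)) (tL S) (tL S'))
  (* (5b) *)
  (h5b : forall n d (G1 : ctx (lm L) n) T (G2 : ext (lm L) n d) S o o',
      C _ (csnoc G1 T) -> Ceqt _ (capp G1 G2) S o o' ->
      Ceqt _ (capp (csnoc G1 T) (text G2)) (tL S) (tR o) (tR o'))
  (* (6a) *)
  (h6a : forall n d (G1 : ctx (lm L) n) T (G2 : ext (lm L) n.+1 d) S S' r,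
      Ceq _ (capp (csnoc G1 T) G2) S S' -> Ct _ G1 T r ->
      Ceq _ (capp G1 (sext r G2)) (sL r S) (sL r S'))
  (* (6b) *)
  (h6b : forall n d (G1 : ctx (lm L) n) T (G2 : ext (lm L) n.+1 d) S o o' r,
      Ceqt _ (capp (csnoc G1 T) G2) S o o' -> Ct _ G1 T r ->
      Ceqt _ (capp G1 (sext r G2)) (sL r S) (sR r o) (sR r o'))
  (* (7a) *)
  (h7a : forall n d (G1 : ctx (lm L) n) T (G2 : ext (lm L) n.+1 d) S r r',
      C _ (csnoc (capp (csnoc G1 T) G2) S) -> Ceqt _ G1 T r r' ->
      Ceq _ (capp G1 (sext r G2)) (sL r S) (sL r' S))
  (* (7b) *)
  (h7b : forall n d (G1 : ctx (lm L) n) T (G2 : ext (lm L) n.+1 d) S o r r',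
      Ct _ (capp (csnoc G1 T) G2) S o -> Ceqt _ G1 T r r' ->
      Ceqt _ (capp G1 (sext r G2)) (sL r S) (sR r o) (sR r' o)) :
  (* (1) *)
  (forall n d (G1 G1' : ctx (lm L) n) T T' (G2 G2' : ext (lm L) n d),
      simc C Ceq (csnoc G1 T) (csnoc G1' T') ->
      simc C Ceq (capp G1 G2) (capp G1' G2') ->
      simc C Ceq (capp (csnoc G1 T) (text G2)) (capp (csnoc G1' T') (text G2'))) /\
  (* (2) *)
  (forall n d (G1 G1' : ctx (lm L) n) T T' (G2 G2' : ext (lm L) n d) S S' o o',
      simc C Ceq (csnoc G1 T) (csnoc G1' T') ->
      simt C Ct Ceq Ceqt (capp G1 G2) S o (capp G1' G2') S' o' ->
      simt C Ct Ceq Ceqt (capp (csnoc G1 T) (text G2)) (tL S) (tR o)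
                         (capp (csnoc G1' T') (text G2')) (tL S') (tR o')) /\
  (* (3) *)
  (forall n d (G1 G1' : ctx (lm L) n) T T' r r' (G2 G2' : ext (lm L) n.+1 d),
      simt C Ct Ceq Ceqt G1 T r G1' T' r' ->
      simc C Ceq (capp (csnoc G1 T) G2) (capp (csnoc G1' T') G2') ->
      simc C Ceq (capp G1 (sext r G2)) (capp G1' (sext r' G2'))) /\
  (* (4) *)
  (forall n d (G1 G1' : ctx (lm L) n) T T' r r' (G2 G2' : ext (lm L) n.+1 d) S S' o o',
      simt C Ct Ceq Ceqt G1 T r G1' T' r' ->
      simt C Ct Ceq Ceqt (capp (csnoc G1 T) G2) S o (capp (csnoc G1' T') G2') S' o' ->
      simt C Ct Ceq Ceqt (capp G1 (sext r G2)) (sL r S) (sR r o)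
                         (capp G1' (sext r' G2')) (sL r' S') (sR r' o')) /\
  (* (5) *)
  (forall n (G G' : ctx (lm L) n) T T',
      simc C Ceq (csnoc G T) (csnoc G' T') ->
      simt C Ct Ceq Ceqt (csnoc G T) (@tL _ L n 0 T) (ret ord_max)
                         (csnoc G' T') (@tL _ L n 0 T') (ret ord_max)).
Proof.
have P1 : forall n d (G1 G1' : ctx (lm L) n) T T' (G2 G2' : ext (lm L) n d),
      simc C Ceq (csnoc G1 T) (csnoc G1' T') ->
      simc C Ceq (capp G1 G2) (capp G1' G2') ->
      simc C Ceq (capp (csnoc G1 T) (text G2)) (capp (csnoc G1' T') (text G2')).
  move=> n d G1 G1' T T'; elim: d => [|d IH] G2 G2' H0.
    by rewrite (@ext_case0 _ _ G2) (@ext_case0 _ _ G2') => H.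
  case: (@ext_caseS _ _ _ G2) => D [S ->]; case: (@ext_caseS _ _ _ G2') => D' [S' ->] /= H.
  move: H => /= /simc_inv [CS CS' Hs Heq].
  case/simc_inv: (H0) => CT CT' _ _.
  apply: simcS.
  - eapply h2a; eapply h5a; [exact CT | eapply h2b; exact CS].
  - eapply h2a; eapply h5a; [exact CT' | eapply h2b; exact CS'].
  - exact: IH.
  - eapply h5a; [exact CT | exact Heq].
have P3 : forall n d (G1 G1' : ctx (lm L) n) T T' r r' (G2 G2' : ext (lm L) n.+1 d),
      simt C Ct Ceq Ceqt G1 T r G1' T' r' ->
      simc C Ceq (capp (csnoc G1 T) G2) (capp (csnoc G1' T') G2') ->
      simc C Ceq (capp G1 (sext r G2)) (capp G1' (sext r' G2')).
  move=> n d G1 G1' T T' r r'; elim: d => [|d IH] G2 G2' H0.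
    rewrite (@ext_case0 _ _ G2) (@ext_case0 _ _ G2') /= => H.
    by case: H0 => _ _ /simc_inv [].
  case: (@ext_caseS _ _ _ G2) => D [S ->]; case: (@ext_caseS _ _ _ G2') => D' [S' ->] /= H.
  move: H => /= /simc_inv [CS CS' Hs Heq].
  case: (H0) => Ctr Ctr' _ Hrr.
  apply: simcS.
  - eapply h2a; eapply h6a; [eapply h2b; exact CS | exact Ctr].
  - eapply h2a; eapply h6a; [eapply h2b; exact CS' | exact Ctr'].
  - exact: IH.
  - eapply h2d; [eapply h6a; [exact Heq | exact Ctr] |].
    eapply h7a; [| exact Hrr].
    eapply h2a; eapply h2c; exact Heq.
split; first exact: P1.
split.
  move=> n d G1 G1' T T' G2 G2' S S' o o' H0 [Ho Ho' Hs He].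
  case/simc_inv: (H0) => CT CT' _ _.
  split.
  - eapply h1_4; [exact CT | exact Ho].
  - eapply h1_4; [exact CT' | exact Ho'].
  - exact: (P1 n d.+1 G1 G1' T T' (esnoc G2 S) (esnoc G2' S')).
  - eapply h5b; [exact CT | exact He].
split; first exact: P3.
split.
  move=> n d G1 G1' T T' r r' G2 G2' S S' o o' H0 [Ho Ho' Hs He].
  case: (H0) => Ctr Ctr' _ Hrr.
  split.
  - eapply h1_5; [exact Ctr | exact Ho].
  - eapply h1_5; [exact Ctr' | exact Ho'].
  - exact: (P3 n d.+1 G1 G1' T T' r r' (esnoc G2 S) (esnoc G2' S')).
  - eapply h3d; [eapply h6b; [exact He | exact Ctr] |].
    eapply h7b; [| exact Hrr].
    eapply h3a; eapply h3c; exact He.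
move=> n G G' T T' H.
case/simc_inv: (H) => CT CT' _ Heq.
have H1 := h1_6 _ _ _ CT; have H1' := h1_6 _ _ _ CT'.
split => //.
- apply: simcS => //.
  + eapply h1_3; exact H1.
  + eapply h1_3; exact H1'.
  + exact: (h5a n 0 G T enil T T' CT Heq).
- eapply h3b; exact H1.
Qed.
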